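(* Let $\theta_+,\theta_-$ be anticommuting (Grassmann-odd) coordinates, let $\eta=\eta(x_+)$ be a fermionic (Grassmann-odd) function of $x_+$ and $\eta^\dagger=\eta^\dagger(x_-)$ its conjugate, a fermionic function of $x_-$, and set $T_1=\theta_+\eta$, $T_2=\theta_-\eta^\dagger$. Define the differential operator $$\mathcal{D}= iT_1\,\partial_+ + iT_2\,\partial_- - T_1T_2\,\partial_+\partial_- ,$$ where $\partial_\pm=\partial/\partial x_\pm$. Let $B(x_+,x_-)=(b_{jk})$ be an $M\times M$ matrix of bosonic (Grassmann-even) smooth functions of $(x_+,x_-)$, and let $(1+\mathcal{D})B$ denote the matrix with entries $(1+\mathcal{D})b_{jk}$. Then $$\det\big[(1+\mathcal{D})B(x_+,x_-)\big]=(1+\mathcal{D})\det\big[B(x_+,x_-)\big].$$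
   Context: Here $x_-$ is the complex conjugate variable of $x_+$. The quantities $T_1,T_2$ are products of two Grassmann-odd objects, hence Grassmann-even, commuting with everything, and satisfy $T_1^2=T_2^2=0$. *)

(* Defs.v *)
From HB Require Import structures.
From mathcomp Require Import all_boot all_order all_algebra all_field.
Set Implicit Arguments. Unset Strict Implicit. Unset Printing Implicit Defensive.
Import GRing.Theory Num.Theory.
Local Open Scope ring_scope.

(* F models the commutative algebra (over the complex numbers) of bosonic
   (Grassmann-even) smooth functions of (x_+, x_-), possibly with values in
   the even part of a Grassmann algebra.  dp, dm model the partial derivatives
   d/dx_+ and d/dx_- : derivations of F. *)

Definition is_derivation (F : comAlgType algC) (d : F -> F) : Prop :=
  (forall f g : F, d (f + g) = d f + d g) /\
  (forall f g : F, d (f * g) = d f * g + f * d g).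

Definition Dop (F : comAlgType algC) (dp dm : F -> F) (T1 T2 : F) (f : F) : F :=
  'i%:A * T1 * dp f + 'i%:A * T2 * dm f - T1 * T2 * dp (dm f).

Definition oneD (F : comAlgType algC) (dp dm : F -> F) (T1 T2 : F) (f : F) : F :=
  f + Dop dp dm T1 T2 f.

(* Main.v *)
Require Import Defs.
From HB Require Import structures.
From mathcomp Require Import all_boot all_order all_algebra all_field.
From mathcomp Require Import ring.
Import GRing.Theory Num.Theory.
Local Open Scope ring_scope.

Section S.
Variables (F : comAlgType algC) (dp dm : F -> F) (T1 T2 : F).
Hypotheses (hdp : is_derivation dp) (hdm : is_derivation dm)
  (hT1 : T1 ^+ 2 = 0) (hT2 : T2 ^+ 2 = 0).

Lemma der0 {d : F -> F} : is_derivation d -> d 0 = 0.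
Proof. case=> hA _; have := hA 0 0; rewrite addr0 => /eqP.
by rewrite -subr_eq subrr eq_sym => /eqP. Qed.

Lemma derB {d : F -> F} : is_derivation d -> forall x y, d (x - y) = d x - d y.
Proof. move=> hd x y; have [hA _] := hd.
have hN : d (- y) = - d y.
  apply/eqP; rewrite -subr_eq0 opprK -hA addNr; exact/eqP/der0.
by rewrite hA hN. Qed.

Lemma der1 {d : F -> F} : is_derivation d -> d 1 = 0.
Proof. case=> _ hM; have := hM 1 1; rewrite !mul1r mulr1 => /eqP.
by rewrite -subr_eq subrr eq_sym => /eqP. Qed.

Definition phi := oneD dp dm T1 T2.

Lemma phiB : zmod_morphism phi.
Proof. move=> x y; rewrite /phi /oneD /Dop !(derB hdp) !(derB hdm) !(derB hdp).
ring. Qed.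

Lemma ci2 : ('i%:A : F) * 'i%:A = -1.
Proof. by rewrite mulr_algl scalerA -expr2 sqrCi scaleN1r. Qed.

Lemma phiM : monoid_morphism phi.
Proof. split.
  by rewrite /phi /oneD /Dop (der1 hdm) (der0 hdp) (der1 hdp); ring.
move=> f g; rewrite /phi /oneD /Dop.
have [_ Mp] := hdp; have [Ap _] := hdp; have [Am Mm] := hdm.
rewrite Mm Mp Ap !Mp.
set c := ('i%:A : F).
have hc : c * c = -1 by exact: ci2.
set fp := dp f; set gp := dp g; set fm := dm f; set gm := dm g.
set fpm := dp (dm f); set gpm := dp (dm g).
transitivity ((f * g + c * T1 * (fp * g + f * gp) + c * T2 * (fm * g + f * gm) -
   T1 * T2 * (fpm * g + fm * gp + (fp * gm + f * gpm))) + (c * c + 1) * T1 * T2 * (fp * gm + fm * gp)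
   + T1 ^+ 2 * (c * c * fp * gp - c * T2 * fp * gpm - c * T2 * fpm * gp + T2 ^+ 2 * fpm * gpm)
   + T2 ^+ 2 * (c * c * fm * gm - c * T1 * fm * gpm - c * T1 * fpm * gm)).
  by rewrite hc hT1 hT2; ring.
ring.
Qed.

HB.instance Definition _ := GRing.isZmodMorphism.Build F F phi phiB.
HB.instance Definition _ := GRing.isMonoidMorphism.Build F F phi phiM.

Lemma detphi (M : nat) (B : 'M[F]_M) : \det (map_mx phi B) = phi (\det B).
Proof. exact: det_map_mx. Qed.
End S.

Theorem lemma1 (F : comAlgType algC) (dp dm : F -> F) (T1 T2 : F)
  (hdp : is_derivation dp) (hdm : is_derivation dm)
  (hT1 : T1 ^+ 2 = 0) (hT2 : T2 ^+ 2 = 0)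
  (M : nat) (B : 'M[F]_M) :
  \det (map_mx (oneD dp dm T1 T2) B) = oneD dp dm T1 T2 (\det B).
Proof. exact: (@detphi F dp dm T1 T2 hdp hdm hT1 hT2 M B). Qed.
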